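(* Let $G=(V,E)$ be a finite directed graph and let $R(G)$ denote its root. Then $R(G)$ is the smallest subset $S\subseteq V$ (with respect to inclusion) satisfying both of the following conditions: (i) for every $v\in V$ there exist $w\in S$ and a walk from $w$ to $v$ in $G$; (ii) if $v\in S$, $w\in V$ and $(w,v)\in E$, then $w\in S$.
   Context: A directed graph (digraph) is a pair $G=(V,E)$ with $V$ a finite set and $E\subseteq V\times V$; loops $(v,v)$ are allowed. A walk from $v_0$ to $v_n$ is a sequence $(v_0,\dots,v_n)$ of vertices, $n\ge 0$, with $(v_{i-1},v_i)\in E$ for all $i\in\{1,\dots,n\}$; write $v\leadsto w$ if there is a walk from $v$ to $w$. Define $v\sim w$ iff $v\leadsto w$ and $w\leadsto v$ (strongly connected components). The quotient graph $G^{SCC}=(V/_\sim,E^{SCC})$ has edges $(P,Q)$ for $P\ne Q$ such that $(p,q)\in E$ for some $p\in P$, $q\in Q$. The source of a digraph $H=(W,F)$ is $\mathrm{source}(H)=\{v\in W: \text{no edge of }F\text{ ends in }v\}$. The root of $G$ is $R(G):=\bigcup \mathrm{source}(G^{SCC})\subseteq V$, i.e. the union of those strongly connected components that have no incoming edge from another component. *)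

(* Defs.v *)
(* A finite digraph is (V : finType, E : rel V); loops allowed. *)
From mathcomp Require Import all_boot.
Set Implicit Arguments. Unset Strict Implicit. Unset Printing Implicit Defensive.

Section Root.
Variables (V : finType) (E : rel V).

Definition walk_rel (v w : V) : bool := connect E v w.

Definition scc (v : V) : {set V} := [set w | walk_rel v w && walk_rel w v].

Definition sccs : {set {set V}} := [set scc v | v in V].

Definition scc_edge (P Q : {set V}) : bool :=
  (P != Q) && [exists p in P, exists q in Q, E p q].

Definition scc_sources : {set {set V}} :=
  [set Q in sccs | ~~ [exists P in sccs, scc_edge P Q]].

Definition digraph_root : {set V} := \bigcup_(Q in scc_sources) Q.

Definition root_cond (S : {set V}) : Prop :=
  (forall v : V, exists2 w, w \in S & walk_rel w v) /\
  (forall v w : V, v \in S -> E w v -> w \in S).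
End Root.

(* Main.v *)
Require Import Defs.
From mathcomp Require Import all_boot.

Section Aux.
Variables (V : finType) (E : rel V).

Lemma back_closed (S : {set V}) :
  (forall v w : V, v \in S -> E w v -> w \in S) ->
  forall x y, connect E x y -> y \in S -> x \in S.
Proof.
move=> cl x y /connectP [p]; elim: p x => [|z p IH] x /=.
  by move=> _ ->.
case/andP=> Exz pz ey yS; apply: (cl z) => //; exact: IH pz ey yS.
Qed.

Lemma cross_edge (Q : pred V) w r :
  connect E w r -> Q r -> ~~ Q w -> exists a b, [/\ ~~ Q a, Q b & E a b].
Proof.
move=> /connectP [p]; elim: p w => [|z p IH] w /=.
  by move=> _ -> ->.
case/andP=> Ewz pz ey Qr Qw.
case Qz: (Q z); first by exists w, z; rewrite Qz.
by apply: (IH z) => //; rewrite Qz.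
Qed.

Lemma scc_eq a b : connect E a b -> connect E b a -> scc E a = scc E b.
Proof.
move=> ab ba; apply/setP=> x; rewrite !inE /walk_rel.
apply/andP/andP=> [[ax xa]|[bx xb]]; split.
- exact: connect_trans ba ax.
- exact: connect_trans xa ab.
- exact: connect_trans ab bx.
- exact: connect_trans xb ba.
Qed.

Lemma rootP r :
  reflect (forall w, connect E w r -> connect E r w) (r \in digraph_root E).
Proof.
apply: (iffP idP).
- case/bigcupP=> Q; rewrite inE => /andP [/imsetP [v _ ->] nsrc] rQ w wr.
  move: rQ; rewrite inE /walk_rel => /andP [vr rv].
  case: (boolP (connect E r w)) => // nrw; exfalso.
  have nw : ~~ (w \in scc E v).
    rewrite inE /walk_rel; apply/negP => /andP [vw _].
    by move/negP: nrw; apply; exact: connect_trans rv vw.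
  have rQ : r \in scc E v by rewrite inE /walk_rel vr rv.
  have [a [b [na bQ Eab]]] := @cross_edge (fun x => x \in scc E v) w r wr rQ nw.
  move/negP: nsrc; apply; apply/existsP; exists (scc E a).
  rewrite imset_f //=; rewrite /scc_edge.
  have aa : a \in scc E a by rewrite inE /walk_rel connect0.
  apply/andP; split.
    by apply/eqP=> eqa; move: na; rewrite -eqa aa.
  by apply/existsP; exists a; rewrite aa /=; apply/existsP; exists b; rewrite bQ Eab.
- move=> P; apply/bigcupP; exists (scc E r); last by rewrite inE /walk_rel connect0.
  rewrite inE imset_f //=; apply/negP => /existsP [P' /andP [/imsetP [u _ ->]]].
  case/andP=> neq /existsP [p /andP [pu /existsP [q /andP [qr Epq]]]].
  move: pu qr; rewrite !inE /walk_rel => /andP [up pu] /andP [rq qr].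
  have pr : connect E p r by apply: connect_trans (connect1 Epq) qr.
  have rp := P p pr.
  move/eqP: neq; apply; apply: scc_eq.
  + exact: connect_trans up pr.
  + exact: connect_trans rp pu.
Qed.

End Aux.

Theorem theorem2p4 (V : finType) (E : rel V) :
  root_cond E (digraph_root E) /\
  (forall S : {set V}, root_cond E S -> digraph_root E \subset S).
Proof.
have cond : root_cond E (digraph_root E).
  split.
  - move=> v.
    have vv : connect E v v := connect0 E v.
    case: (@arg_minnP V v (fun w => connect E w v) (fun w => #|[set x | connect E x w]|) vv)
      => w wv wmin.
    exists w => //; apply/rootP => x xw.
    have xv : connect E x v := connect_trans xw wv.
    have sub : [set y | connect E y x] \subset [set y | connect E y w].
      by apply/subsetP=> y; rewrite !inE => yx; exact: connect_trans yx xw.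
    have := wmin x xv => le.
    have /eqP eqs : [set y | connect E y x] == [set y | connect E y w].
      by rewrite eqEcard sub le.
    have : w \in [set y | connect E y w] by rewrite inE connect0.
    by rewrite -eqs inE.
  - move=> v w /rootP Pv Ewv; apply/rootP => x xw.
    have xv : connect E x v := connect_trans xw (connect1 Ewv).
    exact: connect_trans (connect1 Ewv) (Pv x xv).
split=> // S [Si Sii]; apply/subsetP => r /rootP Pr.
case: (Si r) => w wS wr.
exact: (@back_closed V E S Sii r w (Pr w wr) wS).
Qed.
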